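(* Let $\beta_{H\leftarrow M},\beta_{M\leftarrow H},\rho,\gamma,\mu>0$, $l\ge0$, $p,q\in[0,1]$ with $c(p,q)+l>0$. For every solution of system (VBH) with initial condition in $\Omega$, $$\lim_{t\to+\infty}I_P(t)=\lim_{t\to+\infty}I_{NP}(t)=\lim_{t\to+\infty}I_M(t)=0.$$
   Context: Let $c(p,q):=1-p(1-q)$. System (VBH) is the ODE system $$S_P'=-\beta_{H\leftarrow M}\rho I_M\frac{qS_P}{c(p,q)+l},\qquad I_P'=\beta_{H\leftarrow M}\rho I_M\frac{qS_P}{c(p,q)+l}-\gamma I_P,$$ $$S_{NP}'=-\beta_{H\leftarrow M}\rho I_M\frac{S_{NP}}{c(p,q)+l},\qquad I_{NP}'=\beta_{H\leftarrow M}\rho I_M\frac{S_{NP}}{c(p,q)+l}-\gamma I_{NP},$$ $$I_M'=\beta_{M\leftarrow H}(1-I_M)\frac{qI_P+I_{NP}}{c(p,q)+l}-\mu I_M,$$ with constant parameters $p,q,l$. Let $\Omega:=\{(S_P,I_P,S_{NP},I_{NP},I_M)\in\mathbb{R}^5_{\ge0}:\ S_P+I_P+S_{NP}+I_{NP}\le1,\ I_M\le1\}$. *)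

(* Defs.v *)
From Stdlib Require Import Reals.
From Coquelicot Require Import Coquelicot.
Open Scope R_scope.

Definition cpq (p q : R) : R := 1 - p * (1 - q).

Definition VBH_solution (bHM bMH rho gamma mu p q l : R)
    (SP IP SNP INP IM : R -> R) : Prop :=
  filterlim SP (at_right 0) (locally (SP 0)) /\
  filterlim IP (at_right 0) (locally (IP 0)) /\
  filterlim SNP (at_right 0) (locally (SNP 0)) /\
  filterlim INP (at_right 0) (locally (INP 0)) /\
  filterlim IM (at_right 0) (locally (IM 0)) /\
  forall t, 0 < t ->
    is_derive SP t (- bHM * rho * IM t * (q * SP t / (cpq p q + l))) /\
    is_derive IP t (bHM * rho * IM t * (q * SP t / (cpq p q + l)) - gamma * IP t) /\
    is_derive SNP t (- bHM * rho * IM t * (SNP t / (cpq p q + l))) /\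
    is_derive INP t (bHM * rho * IM t * (SNP t / (cpq p q + l)) - gamma * INP t) /\
    is_derive IM t (bMH * (1 - IM t) * ((q * IP t + INP t) / (cpq p q + l)) - mu * IM t).

Definition in_Omega (sp ip snp inp im : R) : Prop :=
  0 <= sp /\ 0 <= ip /\ 0 <= snp /\ 0 <= inp /\ 0 <= im /\
  sp + ip + snp + inp <= 1 /\ im <= 1.

(* Main.v *)
Require Import Defs.
From Stdlib Require Import Reals Lra Classical.
From Coquelicot Require Import Coquelicot.
Open Scope R_scope.

Lemma cR_mult (f g : R -> R) x : continuous f x -> continuous g x ->
  continuous (fun y => f y * g y) x.
Proof. intros; now apply (continuous_mult f g). Qed.
Lemma cR_plus (f g : R -> R) x : continuous f x -> continuous g x ->
  continuous (fun y => f y + g y) x.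
Proof. intros; now apply (continuous_plus f g). Qed.
Lemma cR_minus (f g : R -> R) x : continuous f x -> continuous g x ->
  continuous (fun y => f y - g y) x.
Proof. intros; now apply (continuous_minus f g). Qed.
Lemma cR_const (c : R) x : continuous (fun _ : R => c) x.
Proof. apply continuous_const. Qed.
Lemma cR_id x : continuous (fun y : R => y) x.
Proof. apply continuous_id. Qed.

Definition Rmn (x y : R) := (x + y - Rabs (x - y)) / 2.
Lemma Rmn_eq x y : Rmn x y = Rmin x y.
Proof. unfold Rmn, Rmin. destruct (Rle_dec x y).
 rewrite Rabs_left1; lra. rewrite Rabs_right; lra. Qed.
Lemma cR_min (f g : R -> R) x : continuous f x -> continuous g x ->
  continuous (fun y => Rmin (f y) (g y)) x.
Proof. intros. apply (continuous_ext (fun y => Rmn (f y) (g y))).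
 intros; apply Rmn_eq. unfold Rmn.
 apply cR_mult; [|apply cR_const].
 apply cR_minus. now apply cR_plus.
 apply continuous_Rabs_comp. now apply cR_minus. Qed.

Lemma deriv_cont (f : R -> R) x d : is_derive f x d -> continuous f x.
Proof. intros H. apply (ex_derive_continuous (K:=R_AbsRing) (V:=R_NormedModule) f x). now exists d. Qed.

Lemma mono_dec (f df : R -> R) a b : a <= b ->
  (forall x, a <= x <= b -> is_derive f x (df x)) ->
  (forall x, a <= x <= b -> df x <= 0) -> f b <= f a.
Proof.
  intros Hab Hd Hs.
  destruct (MVT_gen f a b df) as [c [Hc He]].
  - intros x Hx. rewrite Rmin_left in Hx by lra. rewrite Rmax_right in Hx by lra.
    apply Hd; lra.
  - intros x Hx. rewrite Rmin_left in Hx by lra. rewrite Rmax_right in Hx by lra.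
    apply continuity_pt_filterlim. eapply deriv_cont, Hd; lra.
  - rewrite Rmin_left in Hc by lra. rewrite Rmax_right in Hc by lra.
    assert (df c <= 0) by (apply Hs; lra).
    assert (df c * (b - a) <= 0) by nra. lra.
Qed.

Lemma mono_inc (f df : R -> R) a b : a <= b ->
  (forall x, a <= x <= b -> is_derive f x (df x)) ->
  (forall x, a <= x <= b -> 0 <= df x) -> f a <= f b.
Proof.
  intros Hab Hd Hs.
  assert (- f b <= - f a); [|lra].
  apply (mono_dec (fun x => - f x) (fun x => - df x)); auto.
  intros x Hx. apply (is_derive_opp f x (df x)). auto.
  intros x Hx. specialize (Hs x Hx). lra.
Qed.

Lemma left_lower (F : R -> R) c d : is_derive F c d -> 0 < d -> 0 < c ->
  exists s, 0 < s < c /\ F s < F c.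
Proof.
  intros H Hd Hc. apply is_derive_Reals in H.
  destruct (H d Hd) as [del Hdel].
  set (h := - Rmin (del/2) (c/2)).
  assert (Hm : 0 < Rmin (del/2) (c/2)) by (apply Rmin_glb_lt; destruct del; simpl; lra).
  assert (Hm1 := Rmin_l (del/2) (c/2)). assert (Hm2 := Rmin_r (del/2) (c/2)).
  assert (hn : h <> 0) by (unfold h; lra).
  assert (ha : Rabs h < del) by (unfold h; rewrite Rabs_left by lra; destruct del; simpl in *; lra).
  specialize (Hdel h hn ha).
  exists (c + h). split. unfold h; lra.
  apply Rabs_def2 in Hdel. destruct Hdel as [_ Hq].
  assert (0 < (F (c + h) - F c) / h) by lra.
  assert (hneg : h < 0) by (unfold h; lra).
  assert (F (c+h) - F c < 0); [|lra].
  apply Rmult_lt_reg_r with (- / h).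
  apply Ropp_0_gt_lt_contravar. apply Rinv_lt_0_compat; lra.
  unfold Rdiv in *. nra.
Qed.

Lemma ext_cont (f : R -> R) : filterlim f (at_right 0) (locally (f 0)) ->
  (forall t, 0 < t -> continuous f t) ->
  forall c, 0 <= c -> continuous (fun t => f (Rmax 0 t)) c.
Proof.
  intros H0 Hc c Hc0. destruct (Rle_lt_or_eq_dec _ _ Hc0) as [Hp|<-].
  - apply (continuous_ext_loc (fun t => f (Rmax 0 t)) f).
    apply (locally_open (fun y => 0 < y)). apply open_gt.
    intros y Hy. now rewrite Rmax_right by lra. exact Hp.
    now apply Hc.
  - intros P HP. unfold filtermap. replace (Rmax 0 0) with 0 in HP by (rewrite Rmax_left; lra).
    specialize (H0 P HP). destruct H0 as [del Hdel].
    exists del. intros y Hy. destruct (Rle_or_lt y 0).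
    + rewrite Rmax_left by lra. now apply locally_singleton.
    + rewrite Rmax_right by lra. now apply Hdel.
Qed.

Lemma bound_on (f : R -> R) a b : a <= b -> (forall c, a <= c <= b -> continuous f c) ->
  exists B, 0 <= B /\ forall c, a <= c <= b -> Rabs (f c) <= B.
Proof.
  intros Hab Hc. destruct (continuity_ab_maj (fun t => Rabs (f t)) a b Hab) as [M [HM _]].
  intros c Hc'. apply continuity_pt_filterlim. apply continuous_Rabs_comp. now apply Hc.
  exists (Rabs (f M)). split. apply Rabs_pos. exact HM.
Qed.
Lemma abs_bnd x B : Rabs x <= B -> - B <= x <= B.
Proof. intros. destruct (Rle_or_lt 0 x). rewrite Rabs_right in H; lra. rewrite Rabs_left in H; lra. Qed.

Lemma prod_lb x y r B : 0 < r -> -r <= x -> -r <= y -> Rabs x <= B -> Rabs y <= B -> - (B * r) <= x * y.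
Proof. intros. apply abs_bnd in H2. apply abs_bnd in H3.
 destruct (Rle_or_lt 0 x); destruct (Rle_or_lt 0 y); nra. Qed.

Lemma qsum_lb q a b r : 0 <= q <= 1 -> -r <= a -> -r <= b -> 0 < r -> - (2*r) <= q*a + b.
Proof. intros. destruct (Rle_or_lt 0 a); nra. Qed.

Lemma caseS A q B r im s Lam : 0 < A -> 0 <= q <= 1 -> 0 < r -> s = - r -> Rabs im <= B ->
  A * B < Lam -> 0 < - (A*q) * (im * s) + Lam * r.
Proof. intros. subst s. apply abs_bnd in H3.
 assert (- B <= q*im).
 { destruct (Rle_or_lt 0 im). assert (0 <= q*im) by (apply Rmult_le_pos; lra). lra.
   assert (0 <= (1-q)*(-im)) by (apply Rmult_le_pos; lra). lra. }
 assert (0 < A * r) by (apply Rmult_lt_0_compat; lra).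
 assert ((A*r)*(-B) <= (A*r)*(q*im)) by (apply Rmult_le_compat_l; lra).
 replace (- (A * q) * (im * - r) + Lam * r) with ((A*r)*(q*im) + Lam*r) by ring.
 assert (A*B*r < Lam * r) by (apply Rmult_lt_compat_r; lra). nra. Qed.

Lemma caseI A q B r im s i g Lam : 0 < A -> 0 <= q <= 1 -> 0 < r -> i = - r -> 0 < g ->
  Rabs im <= B -> Rabs s <= B -> -r <= im -> -r <= s ->
  A * B < Lam -> 0 < (A*q) * (im * s) - g * i + Lam * r.
Proof. intros. subst i. assert (H9 := prod_lb im s r B H1 H6 H7 H4 H5).
 assert (- (B*r) <= q*(im*s)).
 { destruct (Rle_or_lt 0 (im*s)). assert (0 <= q*(im*s)) by (apply Rmult_le_pos; lra). 
   assert (0 <= B*r). apply abs_bnd in H4. apply Rmult_le_pos; lra. lra.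
   assert (0 <= (1-q)*(-(im*s))) by (apply Rmult_le_pos; lra). lra. }
 assert (A*(-(B*r)) <= A*(q*(im*s))) by (apply Rmult_le_compat_l; lra).
 assert (A*B*r < Lam * r) by (apply Rmult_lt_compat_r; lra).
 assert (0 < g * r) by (apply Rmult_lt_0_compat; lra). nra. Qed.

Lemma caseM Bb q B r ip inp im mu Lam : 0 < Bb -> 0 <= q <= 1 -> 0 < r -> im = - r -> 0 < mu ->
  -r <= ip -> -r <= inp -> r <= B -> 2*Bb*(B+1) < Lam ->
  0 < Bb * (1 - im) * (q*ip + inp) - mu * im + Lam * r.
Proof. intros. subst im. assert (H9 := qsum_lb q ip inp r H0 H4 H5 H1).
 assert (0 < Bb*(1+r)) by (apply Rmult_lt_0_compat; lra).
 assert (Bb*(1+r)*(-(2*r)) <= Bb*(1+r)*(q*ip+inp)) by (apply Rmult_le_compat_l; lra).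
 assert (Bb*(1+r) <= Bb*(1+B)) by (apply Rmult_le_compat_l; lra).
 assert (2*Bb*(B+1)*r < Lam * r) by (apply Rmult_lt_compat_r; lra).
 assert (Bb*(1+r)*(2*r) <= Bb*(1+B)*(2*r)) by (apply Rmult_le_compat_r; lra).
 assert (0 < mu * r) by (apply Rmult_lt_0_compat; lra).
 replace (1 - - r) with (1 + r) by ring. nra. Qed.

Lemma caseM1 Bb q B r ip inp im mu Lam : 0 < Bb -> 0 <= q <= 1 -> 0 < r -> 1 - im = - r -> 0 < mu ->
  Rabs ip <= B -> Rabs inp <= B -> 2*Bb*(B+1) < Lam ->
  0 < - (Bb * (1 - im) * (q*ip + inp) - mu * im) + Lam * r.
Proof. intros. rewrite H2. apply abs_bnd in H4. apply abs_bnd in H5.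
 assert (q*ip + inp >= -(2*B)).
 { destruct (Rle_or_lt 0 ip). assert (0 <= q*ip) by (apply Rmult_le_pos; lra). lra.
   assert (0 <= (1-q)*(-ip)) by (apply Rmult_le_pos; lra). lra. }
 assert (im = 1 + r) by lra. subst im.
 assert (0 < Bb*r) by (apply Rmult_lt_0_compat; lra).
 assert (Bb*r*(-(2*B)) <= Bb*r*(q*ip+inp)) by (apply Rmult_le_compat_l; lra).
 assert (2*Bb*(B+1)*r < Lam * r) by (apply Rmult_lt_compat_r; lra).
 assert (0 < mu * (1+r)) by (apply Rmult_lt_0_compat; lra). nra. Qed.
Lemma deriv_F (f : R->R) c d Lam : 0 < c -> is_derive f c d ->
  is_derive (fun t => f (Rmax 0 t) * exp (- Lam * t)) c ((d - Lam * f c) * exp (-Lam * c)).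
Proof.
  intros Hc Hd.
  apply (is_derive_ext_loc (fun t => f t * exp (- Lam * t))).
  apply (locally_open (fun y => 0 < y)). apply open_gt.
  intros y Hy. now rewrite Rmax_right by lra. exact Hc.
  assert (He : is_derive (fun t => exp (- Lam * t)) c (- Lam * exp (- Lam * c))).
  { auto_derive. easy. ring. }
  eapply is_derive_ext. intros t; reflexivity.
  replace ((d - Lam * f c) * exp (- Lam * c)) with (plus (mult d (exp (-Lam*c))) (mult (f c) (- Lam * exp (- Lam * c)))).
  apply (is_derive_mult f (fun t => exp (- Lam * t))); auto.
  intros; apply Rmult_comm.
  unfold plus, mult; simpl. ring.
Qed.

Lemma key_contra (m F : R -> R) c T d : (forall t, 0 <= t <= T -> m c <= m t) ->
  (forall t, m t <= F t) -> F c = m c -> 0 < c -> c <= T -> is_derive F c d -> 0 < d -> False.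
Proof.
  intros Hm HF Hc Hc0 HcT Hd Hd0. destruct (left_lower F c d Hd Hd0 Hc0) as [s [Hs Hs']].
  specialize (Hm s ltac:(lra)). specialize (HF s). lra.
Qed.

Lemma div_exp u v e : 0 < e -> u * e <= v * e -> u <= v.
Proof. intros. apply Rmult_le_reg_r with e; auto. Qed.

Lemma div_exp_lt u v e : 0 < e -> u * e < v * e -> u < v.
Proof. intros. apply Rmult_lt_reg_r with e; auto. Qed.

Lemma min6_cases a1 a2 a3 a4 a5 a6 : let m := Rmin a1 (Rmin a2 (Rmin a3 (Rmin a4 (Rmin a5 a6)))) in
  (m = a1 \/ m = a2 \/ m = a3 \/ m = a4 \/ m = a5 \/ m = a6) /\
  m <= a1 /\ m <= a2 /\ m <= a3 /\ m <= a4 /\ m <= a5 /\ m <= a6.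
Proof. intros m. unfold m.
  assert (Ho : forall x y, Rmin x y = x \/ Rmin x y = y) by (intros x y; unfold Rmin; destruct (Rle_dec x y); auto).
  assert (Hl := Rmin_l). assert (Hr := Rmin_r).
  remember (Rmin a5 a6) as m5. remember (Rmin a4 m5) as m4. remember (Rmin a3 m4) as m3.
  remember (Rmin a2 m3) as m2. remember (Rmin a1 m2) as m1.
  assert (L5 : m5 <= a5) by (subst; apply Hl). assert (R5 : m5 <= a6) by (subst; apply Hr).
  assert (L4 : m4 <= a4) by (subst m4; apply Hl). assert (R4 : m4 <= m5) by (subst m4; apply Hr).
  assert (L3 : m3 <= a3) by (subst m3; apply Hl). assert (R3 : m3 <= m4) by (subst m3; apply Hr).
  assert (L2 : m2 <= a2) by (subst m2; apply Hl). assert (R2 : m2 <= m3) by (subst m2; apply Hr).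
  assert (L1 : m1 <= a1) by (subst m1; apply Hl). assert (R1 : m1 <= m2) by (subst m1; apply Hr).
  assert (O5 : m5 = a5 \/ m5 = a6) by (subst; apply Ho).
  assert (O4 : m4 = a4 \/ m4 = m5) by (subst m4; apply Ho).
  assert (O3 : m3 = a3 \/ m3 = m4) by (subst m3; apply Ho).
  assert (O2 : m2 = a2 \/ m2 = m3) by (subst m2; apply Ho).
  assert (O1 : m1 = a1 \/ m1 = m2) by (subst m1; apply Ho).
  split; [|repeat split; lra].
  destruct O1 as [-> | ->]; auto. destruct O2 as [-> | ->]; auto.
  destruct O3 as [-> | ->]; auto 6. all: try (destruct O4 as [-> | ->]; auto 6). all: try (destruct O5 as [-> | ->]; auto 7).
Qed.

Lemma invariance (bHM bMH rho gamma mu l p q : R)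
  (HbHM : 0 < bHM) (HbMH : 0 < bMH) (Hrho : 0 < rho) (Hgamma : 0 < gamma)
  (Hmu : 0 < mu) (Hq : 0 <= q <= 1)
  (Hc : 0 < cpq p q + l)
  (SP IP SNP INP IM : R -> R) :
  VBH_solution bHM bMH rho gamma mu p q l SP IP SNP INP IM ->
  in_Omega (SP 0) (IP 0) (SNP 0) (INP 0) (IM 0) ->
  forall T, 0 < T -> 0 <= SP T /\ 0 <= IP T /\ 0 <= SNP T /\ 0 <= INP T /\ 0 <= IM T /\ IM T <= 1.
Proof.
  intros Hsol H0 T HT.
  destruct Hsol as (r1&r2&r3&r4&r5&Hd).
  destruct H0 as (o1&o2&o3&o4&o5&o6&o7).
  set (K := cpq p q + l) in *.
  assert (C1 : forall t, 0 < t -> continuous SP t) by (intros t Ht; eapply deriv_cont, (proj1 (Hd t Ht))).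
  assert (C2 : forall t, 0 < t -> continuous IP t) by (intros t Ht; eapply deriv_cont, (proj1 (proj2 (Hd t Ht)))).
  assert (C3 : forall t, 0 < t -> continuous SNP t) by (intros t Ht; eapply deriv_cont, (proj1 (proj2 (proj2 (Hd t Ht))))).
  assert (C4 : forall t, 0 < t -> continuous INP t) by (intros t Ht; eapply deriv_cont, (proj1 (proj2 (proj2 (proj2 (Hd t Ht)))))).
  assert (C5 : forall t, 0 < t -> continuous IM t) by (intros t Ht; eapply deriv_cont, (proj2 (proj2 (proj2 (proj2 (Hd t Ht)))))).
  assert (E1 := ext_cont SP r1 C1). assert (E2 := ext_cont IP r2 C2).
  assert (E3 := ext_cont SNP r3 C3). assert (E4 := ext_cont INP r4 C4).
  assert (E5 := ext_cont IM r5 C5).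
  destruct (bound_on (fun t => SP (Rmax 0 t)) 0 T) as [B1 [B1p HB1]]; [lra| intros; apply E1; lra |].
  destruct (bound_on (fun t => IP (Rmax 0 t)) 0 T) as [B2 [B2p HB2]]; [lra| intros; apply E2; lra |].
  destruct (bound_on (fun t => SNP (Rmax 0 t)) 0 T) as [B3 [B3p HB3]]; [lra| intros; apply E3; lra |].
  destruct (bound_on (fun t => INP (Rmax 0 t)) 0 T) as [B4 [B4p HB4]]; [lra| intros; apply E4; lra |].
  destruct (bound_on (fun t => IM (Rmax 0 t)) 0 T) as [B5 [B5p HB5]]; [lra| intros; apply E5; lra |].
  set (B := B1 + B2 + B3 + B4 + B5).
  set (A := bHM * rho / K). set (Bb := bMH / K).
  assert (HA : 0 < A) by (unfold A; apply Rdiv_lt_0_compat; nra).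
  assert (HBb : 0 < Bb) by (unfold Bb; apply Rdiv_lt_0_compat; nra).
  set (Lam := 2 * (A + Bb) * (B + 1) + 1).
  assert (HB0 : 0 <= B) by (unfold B; lra).
  assert (HAB : 0 <= A * B) by (apply Rmult_le_pos; lra).
  assert (HBbB : 0 <= Bb * B) by (apply Rmult_le_pos; lra).
  assert (HL1 : A * B < Lam) by (unfold Lam; lra).
  assert (HL2 : 2 * Bb * (B + 1) < Lam) by (unfold Lam; lra).
  set (F1 := fun t => SP (Rmax 0 t) * exp (- Lam * t)).
  set (F2 := fun t => IP (Rmax 0 t) * exp (- Lam * t)).
  set (F3 := fun t => SNP (Rmax 0 t) * exp (- Lam * t)).
  set (F4 := fun t => INP (Rmax 0 t) * exp (- Lam * t)).
  set (F5 := fun t => IM (Rmax 0 t) * exp (- Lam * t)).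
  set (F6 := fun t => (1 - IM (Rmax 0 t)) * exp (- Lam * t)).
  set (m := fun t => Rmin (F1 t) (Rmin (F2 t) (Rmin (F3 t) (Rmin (F4 t) (Rmin (F5 t) (F6 t)))))).
  assert (Cex : forall t, continuous (fun t => exp (- Lam * t)) t).
  { intros t. apply continuous_exp_comp. apply cR_mult. apply cR_const. apply cR_id. }
  assert (Cm : forall c, 0 <= c -> continuous m c).
  { intros c Hc0. unfold m, F1, F2, F3, F4, F5, F6.
    repeat apply cR_min; apply cR_mult; auto.
    apply cR_minus; auto. apply cR_const. }
  destruct (continuity_ab_min m 0 T) as [c [Hmin Hcr]]; [lra| intros; apply continuity_pt_filterlim, Cm; lra |].
  assert (Hall : forall t, m t <= F1 t /\ m t <= F2 t /\ m t <= F3 t /\ m t <= F4 t /\ m t <= F5 t /\ m t <= F6 t).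
  { intros t. exact (proj2 (min6_cases (F1 t) (F2 t) (F3 t) (F4 t) (F5 t) (F6 t))). }
  assert (Hmc : 0 <= m c).
  { destruct (Rlt_or_le (m c) 0) as [Hneg|Hpos]; [exfalso|exact Hpos].
    assert (Hm0 : 0 <= m 0).
    { assert (Hz : forall f : R -> R, 0 <= f 0 -> 0 <= f (Rmax 0 0) * exp (- Lam * 0)).
      { intros f Hf. rewrite Rmax_left by lra. rewrite Rmult_0_r, exp_0. lra. }
      destruct (proj1 (min6_cases (F1 0) (F2 0) (F3 0) (F4 0) (F5 0) (F6 0))) as [Q|[Q|[Q|[Q|[Q|Q]]]]];
      unfold m; rewrite Q; unfold F1, F2, F3, F4, F5, F6;
      [apply (Hz SP) | apply (Hz IP) | apply (Hz SNP) | apply (Hz INP) | apply (Hz IM) | apply (Hz (fun t => 1 - IM t))]; simpl; lra. }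
    assert (Hc0 : 0 < c) by (destruct (Req_dec c 0) as [->|]; lra).
    assert (He : 0 < exp (- Lam * c)) by apply exp_pos.
    set (e := exp (- Lam * c)) in *.
    destruct (Hall c) as (b1&b2&b3&b4&b5&b6).
    assert (Q0 := proj1 (min6_cases (F1 c) (F2 c) (F3 c) (F4 c) (F5 c) (F6 c))). fold (m c) in Q0.
    unfold F1, F2, F3, F4, F5, F6 in b1, b2, b3, b4, b5, b6, Q0.
    rewrite Rmax_right in b1, b2, b3, b4, b5, b6, Q0 by lra. fold e in b1, b2, b3, b4, b5, b6, Q0.
    assert (A1 := HB1 c Hcr). assert (A2 := HB2 c Hcr). assert (A3 := HB3 c Hcr).
    assert (A4 := HB4 c Hcr). assert (A5 := HB5 c Hcr).
    simpl in A1, A2, A3, A4, A5. rewrite Rmax_right in A1, A2, A3, A4, A5 by lra.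
    assert (A1' : Rabs (SP c) <= B) by (unfold B; lra).
    assert (A2' : Rabs (IP c) <= B) by (unfold B; lra).
    assert (A3' : Rabs (SNP c) <= B) by (unfold B; lra).
    assert (A4' : Rabs (INP c) <= B) by (unfold B; lra).
    assert (A5' : Rabs (IM c) <= B) by (unfold B; lra).
    destruct (Hd c Hc0) as (d1&d2&d3&d4&d5).
    assert (HK : K <> 0) by lra.
    destruct Q0 as [Q|[Q|[Q|[Q|[Q|Q]]]]].
    -
      assert (x2 : SP c <= IP c) by (apply (div_exp _ _ e); lra).
      assert (x5 : SP c <= IM c) by (apply (div_exp _ _ e); lra).
      assert (xn : SP c < 0) by (apply (div_exp_lt _ _ e); lra).
      apply (key_contra m F1 c T _ Hmin (fun t => proj1 (Hall t)) ltac:(unfold F1; rewrite Rmax_right by lra; fold e; lra) Hc0 (proj2 Hcr) (deriv_F SP c _ Lam Hc0 d1)).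
      apply Rmult_lt_0_compat; [|exact He].
      replace (- bHM * rho * IM c * (q * SP c / K) - Lam * SP c) with (- (A*q) * (IM c * SP c) + Lam * (- SP c)) by (unfold A; field; exact HK).
      apply (caseS A q B (- SP c)); auto; lra.
    -
      assert (x1 : IP c <= SP c) by (apply (div_exp _ _ e); lra).
      assert (x5 : IP c <= IM c) by (apply (div_exp _ _ e); lra).
      assert (xn : IP c < 0) by (apply (div_exp_lt _ _ e); lra).
      apply (key_contra m F2 c T _ Hmin (fun t => proj1 (proj2 (Hall t))) ltac:(unfold F2; rewrite Rmax_right by lra; fold e; lra) Hc0 (proj2 Hcr) (deriv_F IP c _ Lam Hc0 d2)).
      apply Rmult_lt_0_compat; [|exact He].
      replace (bHM * rho * IM c * (q * SP c / K) - gamma * IP c - Lam * IP c) with ((A*q) * (IM c * SP c) - gamma * IP c + Lam * (- IP c)) by (unfold A; field; exact HK).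
      apply (caseI A q B (- IP c)); auto; lra.
    -
      assert (x5 : SNP c <= IM c) by (apply (div_exp _ _ e); lra).
      assert (xn : SNP c < 0) by (apply (div_exp_lt _ _ e); lra).
      apply (key_contra m F3 c T _ Hmin (fun t => proj1 (proj2 (proj2 (Hall t)))) ltac:(unfold F3; rewrite Rmax_right by lra; fold e; lra) Hc0 (proj2 Hcr) (deriv_F SNP c _ Lam Hc0 d3)).
      apply Rmult_lt_0_compat; [|exact He].
      replace (- bHM * rho * IM c * (SNP c / K) - Lam * SNP c) with (- (A*1) * (IM c * SNP c) + Lam * (- SNP c)) by (unfold A; field; exact HK).
      apply (caseS A 1 B (- SNP c)); auto; lra.
    -
      assert (x3 : INP c <= SNP c) by (apply (div_exp _ _ e); lra).
      assert (x5 : INP c <= IM c) by (apply (div_exp _ _ e); lra).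
      assert (xn : INP c < 0) by (apply (div_exp_lt _ _ e); lra).
      apply (key_contra m F4 c T _ Hmin (fun t => proj1 (proj2 (proj2 (proj2 (Hall t))))) ltac:(unfold F4; rewrite Rmax_right by lra; fold e; lra) Hc0 (proj2 Hcr) (deriv_F INP c _ Lam Hc0 d4)).
      apply Rmult_lt_0_compat; [|exact He].
      replace (bHM * rho * IM c * (SNP c / K) - gamma * INP c - Lam * INP c) with ((A*1) * (IM c * SNP c) - gamma * INP c + Lam * (- INP c)) by (unfold A; field; exact HK).
      apply (caseI A 1 B (- INP c)); auto; lra.
    -
      assert (x2 : IM c <= IP c) by (apply (div_exp _ _ e); lra).
      assert (x4 : IM c <= INP c) by (apply (div_exp _ _ e); lra).
      assert (xn : IM c < 0) by (apply (div_exp_lt _ _ e); lra).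
      assert (A5b := abs_bnd _ _ A5').
      apply (key_contra m F5 c T _ Hmin (fun t => proj1 (proj2 (proj2 (proj2 (proj2 (Hall t)))))) ltac:(unfold F5; rewrite Rmax_right by lra; fold e; lra) Hc0 (proj2 Hcr) (deriv_F IM c _ Lam Hc0 d5)).
      apply Rmult_lt_0_compat; [|exact He].
      replace (bMH * (1 - IM c) * ((q * IP c + INP c) / K) - mu * IM c - Lam * IM c) with (Bb * (1 - IM c) * (q * IP c + INP c) - mu * IM c + Lam * (- IM c)) by (unfold Bb; field; exact HK).
      apply (caseM Bb q B (- IM c)); auto; lra.
    -
      assert (xn : 1 - IM c < 0) by (apply (div_exp_lt _ _ e); lra).
      assert (dG : is_derive (fun t => 1 - IM t) c (- (bMH * (1 - IM c) * ((q * IP c + INP c) / K) - mu * IM c))).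
      { eapply is_derive_ext. intros t; reflexivity.
        replace (- (bMH * (1 - IM c) * ((q * IP c + INP c) / K) - mu * IM c)) with (minus 0 (bMH * (1 - IM c) * ((q * IP c + INP c) / K) - mu * IM c)).
        apply (is_derive_minus (fun _ => 1) IM). exact (is_derive_const (K:=R_AbsRing) (V:=R_NormedModule) 1 c). exact d5.
        unfold minus, plus, opp; simpl. ring. }
      apply (key_contra m F6 c T _ Hmin (fun t => proj2 (proj2 (proj2 (proj2 (proj2 (Hall t)))))) ltac:(unfold F6; rewrite Rmax_right by lra; fold e; lra) Hc0 (proj2 Hcr) (deriv_F (fun t => 1 - IM t) c _ Lam Hc0 dG)).
      apply Rmult_lt_0_compat; [|exact He].
      replace (- (bMH * (1 - IM c) * ((q * IP c + INP c) / K) - mu * IM c) - Lam * (1 - IM c)) with (- (Bb * (1 - IM c) * (q * IP c + INP c) - mu * IM c) + Lam * (- (1 - IM c))) by (unfold Bb; field; exact HK).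
      apply (caseM1 Bb q B (- (1 - IM c)) (IP c) (INP c) (IM c)); auto; lra. }
  assert (HmT : 0 <= m T) by (specialize (Hmin T ltac:(lra)); lra).
  destruct (Hall T) as (a1&a2&a3&a4&a5&a6).
  assert (Hex : 0 < exp (- Lam * T)) by apply exp_pos.
  unfold F1, F2, F3, F4, F5, F6 in *. rewrite Rmax_right in * by lra.
  repeat split; apply (div_exp _ _ _ Hex); lra.
Qed.

Lemma isd_plus (f g : R -> R) x a b : is_derive f x a -> is_derive g x b -> is_derive (fun y => f y + g y) x (a + b).
Proof. intros. now apply (is_derive_plus f g). Qed.
Lemma isd_scal (k : R) (f : R -> R) x a : is_derive f x a -> is_derive (fun y => k * f y) x (k * a).
Proof. intros. now apply (is_derive_scal f x k a). Qed.
Lemma isd_lin (f : R -> R) (M : R) x a : is_derive f x a -> is_derive (fun y => f y + M * y) x (a + M).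
Proof. intros. replace (a + M) with (a + M * 1) by ring. apply isd_plus; auto. apply isd_scal. apply (is_derive_id x). Qed.

Theorem mainTheorem6 (bHM bMH rho gamma mu l p q : R)
  (HbHM : 0 < bHM) (HbMH : 0 < bMH) (Hrho : 0 < rho) (Hgamma : 0 < gamma)
  (Hmu : 0 < mu) (Hl : 0 <= l) (Hp : 0 <= p <= 1) (Hq : 0 <= q <= 1)
  (Hc : 0 < cpq p q + l)
  (SP IP SNP INP IM : R -> R) :
  VBH_solution bHM bMH rho gamma mu p q l SP IP SNP INP IM ->
  in_Omega (SP 0) (IP 0) (SNP 0) (INP 0) (IM 0) ->
  is_lim IP p_infty 0 /\ is_lim INP p_infty 0 /\ is_lim IM p_infty 0.
Proof.
  intros Hsol H0.
  assert (Hinv := invariance bHM bMH rho gamma mu l p q HbHM HbMH Hrho Hgamma Hmu Hq Hc SP IP SNP INP IM Hsol H0).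
  destruct Hsol as (_&_&_&_&_&Hd).
  set (K := cpq p q + l) in *.
  set (H := fun t => SP t + IP t + SNP t + INP t).
  assert (dH : forall t, 0 < t -> is_derive H t (- gamma * IP t - gamma * INP t)).
  { intros t Ht. destruct (Hd t Ht) as (d1&d2&d3&d4&_). unfold H.
    eapply is_derive_ext. intros; reflexivity.
    replace (- gamma * IP t - gamma * INP t) with
      (- bHM * rho * IM t * (q * SP t / K) + (bHM * rho * IM t * (q * SP t / K) - gamma * IP t) +
       (- bHM * rho * IM t * (SNP t / K)) + (bHM * rho * IM t * (SNP t / K) - gamma * INP t)) by ring.
    apply isd_plus; [apply isd_plus; [apply isd_plus|]|]; assumption. }
  set (H1 := H 1).
  assert (HH1 : forall t, 1 <= t -> H t <= H1).
  { intros t Ht. apply (mono_dec H (fun s => - gamma * IP s - gamma * INP s) 1 t Ht).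
    intros x Hx; apply dH; lra.
    intros x Hx. destruct (Hinv x ltac:(lra)) as (_&a2&_&a4&_).
    assert (0 <= gamma * IP x) by (apply Rmult_le_pos; lra).
    assert (0 <= gamma * INP x) by (apply Rmult_le_pos; lra). lra. }
  assert (HH1p : 0 <= H1).
  { assert (Hone : 0 < 1) by lra. destruct (Hinv 1 Hone) as (a1&a2&a3&a4&_). unfold H1, H. lra. }
  set (eps := gamma * K / (2 * bMH)).
  assert (Heps : 0 < eps) by (unfold eps; apply Rdiv_lt_0_compat; [apply Rmult_lt_0_compat|]; lra).
  set (E := fun t => H t + eps * IM t).
  set (dE := fun t => - gamma * IP t - gamma * INP t + eps * (bMH * (1 - IM t) * ((q * IP t + INP t) / K) - mu * IM t)).
  assert (HdE : forall t, 0 < t -> is_derive E t (dE t)).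
  { intros t Ht. destruct (Hd t Ht) as (d1&d2&d3&d4&d5).
    exact (isd_plus H (fun y => eps * IM y) t _ _ (dH t Ht) (isd_scal eps IM t _ d5)). }
  set (g := fun t => IP t + INP t + IM t).
  set (dg := fun t => (bHM * rho * IM t * (q * SP t / K) - gamma * IP t) + (bHM * rho * IM t * (SNP t / K) - gamma * INP t) + (bMH * (1 - IM t) * ((q * IP t + INP t) / K) - mu * IM t)).
  assert (Hdg : forall t, 0 < t -> is_derive g t (dg t)).
  { intros t Ht. destruct (Hd t Ht) as (d1&d2&d3&d4&d5). unfold g, dg. apply isd_plus; [apply isd_plus|]; assumption. }
  set (del := Rmin (gamma / 2) (eps * mu)).
  assert (Hdel : 0 < del) by (apply Rmin_glb_lt; [lra|apply Rmult_lt_0_compat; lra]).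
  assert (HKi : 0 < / K) by (apply Rinv_0_lt_compat; lra).
  assert (HdEb : forall t, 0 < t -> dE t <= - del * g t).
  { intros t Ht. destruct (Hinv t Ht) as (a1&a2&a3&a4&a5&a6). unfold dE, g.
    replace (eps * (bMH * (1 - IM t) * ((q * IP t + INP t) / K) - mu * IM t))
      with ((gamma / 2) * ((1 - IM t) * (q * IP t + INP t)) - eps * mu * IM t)
      by (unfold eps; field; lra).
    assert (X1 : 0 <= q * IP t) by (apply Rmult_le_pos; lra).
    assert (X2 : q * IP t <= IP t) by (assert (0 <= (1 - q) * IP t) by (apply Rmult_le_pos; lra); lra).
    assert (X3 : (1 - IM t) * (q * IP t + INP t) <= q * IP t + INP t)
      by (assert (0 <= IM t * (q * IP t + INP t)) by (apply Rmult_le_pos; lra); lra).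
    assert (X4 : (gamma/2) * ((1 - IM t) * (q * IP t + INP t)) <= (gamma/2) * (IP t + INP t))
      by (apply Rmult_le_compat_l; lra).
    assert (D1 := Rmin_l (gamma / 2) (eps * mu)). assert (D2 := Rmin_r (gamma / 2) (eps * mu)). fold del in D1, D2.
    assert (X5 : del * (IP t + INP t) <= (gamma/2) * (IP t + INP t)) by (apply Rmult_le_compat_r; lra).
    assert (X6 : del * IM t <= (eps * mu) * IM t) by (apply Rmult_le_compat_r; lra).
    lra. }
  set (M := gamma * H1 + mu + 1).
  assert (HM : 0 < M) by (unfold M; assert (0 <= gamma * H1) by (apply Rmult_le_pos; lra); lra).
  assert (Hdgb : forall t, 1 <= t -> - M <= dg t).
  { intros t Ht. destruct (Hinv t ltac:(lra)) as (a1&a2&a3&a4&a5&a6). unfold dg.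
    assert (Y1 : 0 <= bHM * rho * IM t * (q * SP t / K)).
    { apply Rmult_le_pos. apply Rmult_le_pos. apply Rmult_le_pos; lra. lra.
      apply Rmult_le_pos. apply Rmult_le_pos; lra. lra. }
    assert (Y2 : 0 <= bHM * rho * IM t * (SNP t / K)).
    { apply Rmult_le_pos. apply Rmult_le_pos. apply Rmult_le_pos; lra. lra.
      apply Rmult_le_pos; lra. }
    assert (Y3 : 0 <= bMH * (1 - IM t) * ((q * IP t + INP t) / K)).
    { apply Rmult_le_pos. apply Rmult_le_pos; lra.
      apply Rmult_le_pos. assert (0 <= q * IP t) by (apply Rmult_le_pos; lra). lra. lra. }
    assert (Y4 := HH1 t Ht). unfold H in Y4.
    assert (Y5 : gamma * (IP t + INP t) <= gamma * H1) by (apply Rmult_le_compat_l; lra).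
    assert (Y6 : mu * IM t <= mu * 1) by (apply Rmult_le_compat_l; lra).
    unfold M. lra. }
  assert (HE0 : forall t, 0 < t -> 0 <= E t).
  { intros t Ht. destruct (Hinv t Ht) as (a1&a2&a3&a4&a5&a6). unfold E, H. assert (0 <= eps * IM t) by (apply Rmult_le_pos; lra). lra. }
  assert (Hg0 : forall t, 0 < t -> 0 <= IP t /\ 0 <= INP t /\ 0 <= IM t).
  { intros t Ht. destruct (Hinv t Ht) as (a1&a2&a3&a4&a5&a6). auto. }
  assert (Edec : forall s t, 1 <= s <= t -> E t <= E s).
  { intros s t Hst. apply (mono_dec E dE s t ltac:(lra)).
    intros x Hx; apply HdE; lra.
    intros x Hx. assert (Z := HdEb x ltac:(lra)). destruct (Hg0 x ltac:(lra)) as (z1&z2&z3).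
    assert (0 <= del * g x) by (unfold g; apply Rmult_le_pos; lra). lra. }
  assert (Hlim : forall eta, 0 < eta -> exists N, forall t, N < t -> g t < eta).
  { intros eta Heta.
    destruct (classic (exists N, forall t, N < t -> g t < eta)) as [HN|HN]; [exact HN|exfalso].
    assert (Hinf : forall N, exists t, N < t /\ eta <= g t).
    { intros N. apply NNPP. intros C. apply HN. exists N. intros t Ht.
      apply Rnot_le_lt. intros Hle. apply C. exists t. split; [exact Ht|lra]. }
    set (h := eta / (2 * M)).
    assert (Hh : 0 < h) by (unfold h; apply Rdiv_lt_0_compat; lra).
    assert (HMh : M * h = eta / 2) by (unfold h; field; lra).
    set (c0 := del * eta / 2 * h).
    assert (Hc0 : 0 < c0) by (unfold c0; apply Rmult_lt_0_compat; [apply Rdiv_lt_0_compat; [apply Rmult_lt_0_compat|]|]; lra).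
    assert (Step : forall t, 1 <= t -> eta <= g t -> E (t + h) <= E t - c0).
    { intros t Ht Hgt.
      assert (Glow : forall s, t <= s <= t + h -> eta / 2 <= g s).
      { intros s Hs. assert (W := mono_inc (fun y => g y + M * y) (fun y => dg y + M) t s ltac:(lra)).
        simpl in W. assert (g t + M * t <= g s + M * s).
        { apply W. intros x Hx. apply isd_lin. apply Hdg; lra.
          intros x Hx. assert (Z := Hdgb x ltac:(lra)). lra. }
        assert (M * s - M * t <= M * h) by (replace (M * s - M * t) with (M * (s - t)) by ring; apply Rmult_le_compat_l; lra). lra. }
      assert (W := mono_dec (fun y => E y + (del * eta / 2) * y) (fun y => dE y + del * eta / 2) t (t + h) ltac:(lra)).
      simpl in W. assert (E (t + h) + del * eta / 2 * (t + h) <= E t + del * eta / 2 * t); [|unfold c0; lra].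
      apply W. intros x Hx. apply isd_lin. apply HdE; lra.
      intros x Hx. assert (Z := HdEb x ltac:(lra)). assert (Z2 := Glow x Hx).
      assert (del * (eta / 2) <= del * g x) by (apply Rmult_le_compat_l; lra). lra. }
    assert (Ind : forall k : nat, exists t, 1 <= t /\ E t <= E 1 - INR k * c0).
    { induction k as [|k [t [Ht1 Ht2]]].
      - exists 1. simpl. lra.
      - destruct (Hinf t) as [t' [Ht' Hg']]. exists (t' + h). split; [lra|].
        assert (S1 := Step t' ltac:(lra) Hg'). assert (S2 := Edec t t' ltac:(lra)).
        rewrite S_INR. lra. }
    destruct (INR_archimed c0 (E 1) Hc0) as [n Hn].
    destruct (Ind n) as [t [Ht1 Ht2]]. assert (Z := HE0 t ltac:(lra)). lra. }
  assert (Fin : forall f : R -> R, (forall t, 0 < t -> 0 <= f t /\ f t <= g t) -> is_lim f p_infty 0).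
  { intros f Hf. apply is_lim_spec. intros e. destruct (Hlim e (cond_pos e)) as [N HN].
    exists (Rmax N 1). intros t Ht. assert (HtN := Rmax_l N 1). assert (Ht1 := Rmax_r N 1).
    destruct (Hf t ltac:(lra)). specialize (HN t ltac:(lra)).
    rewrite Rminus_0_r, Rabs_right by lra. lra. }
  split; [|split]; apply Fin; intros t Ht; destruct (Hg0 t Ht) as (a&b&c); unfold g; lra.
Qed.
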